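(* Let $\mathcal{U}$ be a finite-dimensional real Hilbert space, let $\mathcal{W}$ be a real Hilbert space, let $\phi:\mathcal{U}\to\mathcal{B}(\mathcal{U},\mathcal{W})$ be a map, let $(u_i,y_i)\in\mathcal{U}\times\mathcal{U}$, $i=1,\dots,n$, be data, and let $\gamma>0$. For $Q\in\mathcal{B}(\mathcal{W})$ let $L(Q)=\sum_{i=1}^n\|\phi(u_i)^*Q\phi(u_i)u_i-y_i\|_{\mathcal{U}}^2$, and let $\Phi\in\mathcal{B}(\mathcal{U}^n,\mathcal{W})$ be defined by $\Phi(v_1,\dots,v_n)=\sum_{i=1}^n\phi(u_i)v_i$. Consider the problems $$\text{(P)}\quad \min_{Q\in\mathcal{B}^+(\mathcal{W})} L(Q)+\gamma\|Q\|,\qquad \text{(P$'$)}\quad \min_{M\in\mathcal{B}^+(\mathcal{U}^n)} L(\Phi M\Phi^* )+\gamma\|\Phi M\Phi^*\|,$$ where $\|\cdot\|$ is the operator norm. Then a solution (minimizer) of (P) exists if and only if a solution of (P$'$) exists. Moreover, if it exists, a solution of (P) is given by $\hat Q=\Phi M\Phi^*$, where $M\in\mathcal{B}^+(\mathcal{U}^n)$ is a solution of (P$'$).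
   Context: $\mathcal{U}^n$ is the $n$-fold Cartesian product with inner product $\sum_i\langle u_i,v_i\rangle_{\mathcal{U}}$. $\mathcal{B}(\mathcal{X},\mathcal{Y})$ denotes bounded linear operators, $\mathcal{B}(\mathcal{X})=\mathcal{B}(\mathcal{X},\mathcal{X})$, $^*$ is the adjoint. An operator $G$ on a Hilbert space $\mathcal{H}$ is nonnegative if $\langle Gu,u\rangle_{\mathcal{H}}\ge0$ for all $u$ (self-adjointness not required); $\mathcal{B}^+(\mathcal{H})$ is the set of nonnegative operators in $\mathcal{B}(\mathcal{H})$. *)

(* Defs.v *)
From HB Require Import structures.
From mathcomp Require Import all_boot all_order all_algebra.
From mathcomp Require Import boolp classical_sets reals.
Set Implicit Arguments. Unset Strict Implicit. Unset Printing Implicit Defensive.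
Import Order.TTheory GRing.Theory Num.Theory.
Local Open Scope ring_scope.
Local Open Scope classical_set_scope.

Section Hilbert.
Variable R : realType.

Definition inorm (V : lmodType R) (ip : V -> V -> R) (x : V) : R :=
  Num.sqrt (ip x x).

Definition is_inner_product (V : lmodType R) (ip : V -> V -> R) : Prop :=
  [/\ (forall x y, ip x y = ip y x),
      (forall a x y z, ip (a *: x + y) z = a * ip x z + ip y z),
      (forall x, 0 <= ip x x) &
      (forall x, ip x x = 0 -> x = 0)].

Definition ip_complete (V : lmodType R) (ip : V -> V -> R) : Prop :=
  forall s : nat -> V,
    (forall e : R, 0 < e -> exists N : nat, forall m k : nat,
        (N <= m)%N -> (N <= k)%N -> inorm ip (s m - s k) < e) ->
    exists l : V, forall e : R, 0 < e -> exists N : nat, forall m : nat,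
        (N <= m)%N -> inorm ip (s m - l) < e.

Definition is_hilbert (V : lmodType R) (ip : V -> V -> R) : Prop :=
  is_inner_product ip /\ ip_complete ip.

Definition finite_dim (V : lmodType R) : Prop :=
  exists (d : nat) (e : 'I_d -> V),
    forall x : V, exists c : 'I_d -> R, x = \sum_(i < d) c i *: e i.

Definition bounded_op (X Y : lmodType R) (ipX : X -> X -> R) (ipY : Y -> Y -> R)
  (A : X -> Y) : Prop :=
  (forall (a : R) (x z : X), A (a *: x + z) = a *: A x + A z) /\
  exists C : R, forall x, inorm ipY (A x) <= C * inorm ipX x.

Definition opnorm (X Y : lmodType R) (ipX : X -> X -> R) (ipY : Y -> Y -> R)
  (A : X -> Y) : R :=
  sup [set inorm ipY (A x) | x in [set x | inorm ipX x <= 1]].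

Definition adjoint (X Y : lmodType R) (ipX : X -> X -> R) (ipY : Y -> Y -> R)
  (A : X -> Y) : Y -> X :=
  fun y => xget 0 [set v | forall x, ipY (A x) y = ipX x v].

(* nonnegative operator (self-adjointness not required) *)
Definition nonneg_op (X : lmodType R) (ipX : X -> X -> R) (A : X -> X) : Prop :=
  forall x, 0 <= ipX (A x) x.

Definition ip_pow (U : lmodType R) (ipU : U -> U -> R) (n : nat)
  (x z : {ffun 'I_n -> U}) : R := \sum_(i < n) ipU (x i) (z i).

Definition PhiOp (U W : lmodType R) (phi : U -> U -> W) (n : nat) (u : 'I_n -> U)
  (v : {ffun 'I_n -> U}) : W := \sum_(i < n) phi (u i) (v i).

Definition lossL (U W : lmodType R) (ipU : U -> U -> R) (ipW : W -> W -> R)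
  (phi : U -> U -> W) (n : nat) (u y : 'I_n -> U) (Q : W -> W) : R :=
  \sum_(i < n)
    inorm ipU (adjoint ipU ipW (phi (u i)) (Q (phi (u i) (u i))) - y i) ^+ 2.

Definition objP (U W : lmodType R) (ipU : U -> U -> R) (ipW : W -> W -> R)
  (phi : U -> U -> W) (n : nat) (u y : 'I_n -> U) (gamma : R) (Q : W -> W) : R :=
  lossL ipU ipW phi u y Q + gamma * opnorm ipW ipW Q.

Definition PhiMPhi (U W : lmodType R) (ipU : U -> U -> R) (ipW : W -> W -> R)
  (phi : U -> U -> W) (n : nat) (u : 'I_n -> U)
  (M : {ffun 'I_n -> U} -> {ffun 'I_n -> U}) : W -> W :=
  fun w => PhiOp phi u (M (adjoint (ip_pow ipU (n:=n)) ipW (PhiOp phi u) w)).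

Definition solves_P (U W : lmodType R) (ipU : U -> U -> R) (ipW : W -> W -> R)
  (phi : U -> U -> W) (n : nat) (u y : 'I_n -> U) (gamma : R) (Q : W -> W) : Prop :=
  [/\ bounded_op ipW ipW Q, nonneg_op ipW Q &
      forall Q' : W -> W, bounded_op ipW ipW Q' -> nonneg_op ipW Q' ->
        objP ipU ipW phi u y gamma Q <= objP ipU ipW phi u y gamma Q'].

Definition solves_P' (U W : lmodType R) (ipU : U -> U -> R) (ipW : W -> W -> R)
  (phi : U -> U -> W) (n : nat) (u y : 'I_n -> U) (gamma : R)
  (M : {ffun 'I_n -> U} -> {ffun 'I_n -> U}) : Prop :=
  [/\ bounded_op (ip_pow ipU (n:=n)) (ip_pow ipU (n:=n)) M,
      nonneg_op (ip_pow ipU (n:=n)) M &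
      forall M' : {ffun 'I_n -> U} -> {ffun 'I_n -> U},
        bounded_op (ip_pow ipU (n:=n)) (ip_pow ipU (n:=n)) M' ->
        nonneg_op (ip_pow ipU (n:=n)) M' ->
        objP ipU ipW phi u y gamma (PhiMPhi ipU ipW phi u M)
          <= objP ipU ipW phi u y gamma (PhiMPhi ipU ipW phi u M')].

End Hilbert.

(* Main.v *)
Require Import Defs.
From mathcomp Require Import all_boot all_order all_algebra.
From mathcomp Require Import boolp classical_sets reals.
From mathcomp Require Import ring lra.
Import Order.TTheory GRing.Theory Num.Theory.
Local Open Scope ring_scope.
Set Implicit Arguments. Unset Strict Implicit. Unset Printing Implicit Defensive.

Section IPBasics.
Variables (R : realType) (V : lmodType R) (ip : V -> V -> R).
Hypothesis hip : is_inner_product ip.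

Lemma ipC x y : ip x y = ip y x. Proof. by case: hip. Qed.
Lemma ipL a x y z : ip (a *: x + y) z = a * ip x z + ip y z. Proof. by case: hip. Qed.
Lemma ipxx_ge0 x : 0 <= ip x x. Proof. by case: hip. Qed.
Lemma ipxx_eq0 x : ip x x = 0 -> x = 0. Proof. by case: hip => _ _ _; apply. Qed.

Lemma ip0l z : ip 0 z = 0.
Proof. have := ipL 1 0 0 z; rewrite scaler0 addr0 mul1r => h. by apply: (@addrI _ (ip 0 z)); rewrite addr0 -h. Qed.
Lemma ipDl x y z : ip (x + y) z = ip x z + ip y z.
Proof. by rewrite -[x]scale1r ipL mul1r scale1r. Qed.
Lemma ipZl a x z : ip (a *: x) z = a * ip x z.
Proof. by rewrite -[a *: x]addr0 ipL ip0l addr0. Qed.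
Lemma ipNl x z : ip (- x) z = - ip x z.
Proof. by rewrite -scaleN1r ipZl mulN1r. Qed.
Lemma ipBl x y z : ip (x - y) z = ip x z - ip y z.
Proof. by rewrite ipDl ipNl. Qed.
Lemma ip0r z : ip z 0 = 0. Proof. by rewrite ipC ip0l. Qed.
Lemma ipDr x y z : ip z (x + y) = ip z x + ip z y.
Proof. by rewrite ipC ipDl !(ipC z). Qed.
Lemma ipZr a x z : ip z (a *: x) = a * ip z x.
Proof. by rewrite ipC ipZl ipC. Qed.
Lemma ipNr x z : ip z (- x) = - ip z x.
Proof. by rewrite ipC ipNl ipC. Qed.
Lemma ipBr x y z : ip z (x - y) = ip z x - ip z y.
Proof. by rewrite ipDr ipNr. Qed.
Lemma ip_suml I (r : seq I) (P : pred I) (F : I -> V) z :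
  ip (\sum_(i <- r | P i) F i) z = \sum_(i <- r | P i) ip (F i) z.
Proof. apply: (big_morph (fun x => ip x z)) => [x y|]; [exact: ipDl | exact: ip0l]. Qed.
Lemma ip_sumr I (r : seq I) (P : pred I) (F : I -> V) z :
  ip z (\sum_(i <- r | P i) F i) = \sum_(i <- r | P i) ip z (F i).
Proof. by rewrite ipC ip_suml; apply: eq_bigr => i _; rewrite ipC. Qed.

Lemma ip_sep x y : (forall z, ip z x = ip z y) -> x = y.
Proof.
move=> h; apply/eqP; rewrite -subr_eq0; apply/eqP/ipxx_eq0.
by rewrite ipBr !h subrr.
Qed.

Lemma inorm_sq x : inorm ip x ^+ 2 = ip x x.
Proof. by rewrite /inorm sqr_sqrtr // ipxx_ge0. Qed.
Lemma inorm_ge0 x : 0 <= inorm ip x. Proof. exact: sqrtr_ge0. Qed.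
Lemma inorm0 : inorm ip 0 = 0. Proof. by rewrite /inorm ip0l sqrtr0. Qed.
Lemma inorm_eq0 x : inorm ip x = 0 -> x = 0.
Proof.
move=> /eqP; rewrite sqrtr_eq0 => h; apply: ipxx_eq0.
by apply/eqP; rewrite eq_le h ipxx_ge0.
Qed.
Lemma inormZ a x : inorm ip (a *: x) = `|a| * inorm ip x.
Proof.
by rewrite /inorm ipZl ipZr mulrA -expr2 sqrtrM ?sqrtr_sqr // sqr_ge0.
Qed.

Lemma le_sqrt_sq (a b : R) : 0 <= b -> a <= b ^+ 2 -> Num.sqrt a <= b.
Proof.
move=> hb hab; rewrite -(@ger0_norm _ b) // -sqrtr_sqr ler_sqrt //.
exact: sqr_ge0.
Qed.

Lemma CS2 x y : ip x y ^+ 2 <= ip x x * ip y y.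
Proof.
have h := ipxx_ge0 (ip y y *: x - ip x y *: y).
rewrite !(ipBl, ipBr, ipZl, ipZr) (ipC y x) in h.
have [hy0|hy] := eqVneq (ip y y) 0.
  by rewrite hy0 (ipxx_eq0 hy0) ip0r expr2 !mul0r mulr0.
have cpos : 0 < ip y y by rewrite lt_def hy ipxx_ge0.
move: h; set a := ip x x; set b := ip x y; set c := ip y y => h.
have h2 : 0 <= c * (a * c - b ^+ 2).
  by move: h; rewrite (_ : c * (a * c - b ^+ 2) = c * (c * a) - c * (b * b) - (b * (c * b) - b * (b * c))) //; ring.
by move: h2; rewrite pmulr_rge0 // subr_ge0.
Qed.

Lemma CS x y : `|ip x y| <= inorm ip x * inorm ip y.
Proof.
rewrite -sqrtr_sqr /inorm -sqrtrM ?ipxx_ge0 // ler_sqrt ?CS2 //.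
by rewrite mulr_ge0 ?ipxx_ge0.
Qed.

Lemma inormD x y : inorm ip (x + y) <= inorm ip x + inorm ip y.
Proof.
apply: le_sqrt_sq; first by rewrite addr_ge0 ?inorm_ge0.
rewrite ipDl !ipDr (ipC y x) sqrrD !inorm_sq.
have := CS x y; have := ler_norm (ip x y); lra.
Qed.

Lemma inorm_sum I (r : seq I) (P : pred I) (F : I -> V) :
  inorm ip (\sum_(i <- r | P i) F i) <= \sum_(i <- r | P i) inorm ip (F i).
Proof.
elim/big_rec2: _ => [|i s1 s2 _ h]; first by rewrite inorm0.
by apply: le_trans (inormD _ _) _; rewrite lerD2l.
Qed.


Lemma sum_delta m (F : nat -> R) i : (i < m)%N ->
  \sum_(j < m) F j * ((j : nat) == i)%:R = F i.
Proof.
move=> hi; rewrite (bigD1 (Ordinal hi)) //= eqxx mulr1 big1 ?addr0 // => j hj.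
rewrite (_ : (j == i :> nat) = false) ?mulr0 //; apply/negbTE.
by move: hj; apply: contra => /eqP h; apply/eqP/val_inj.
Qed.

Lemma sum_deltaV m (F : nat -> V) i : (i < m)%N ->
  \sum_(j < m) ((j : nat) == i)%:R *: F j = F i.
Proof.
move=> hi; rewrite (bigD1 (Ordinal hi)) //= eqxx scale1r big1 ?addr0 // => j hj.
rewrite (_ : (j == i :> nat) = false) ?scale0r //; apply/negbTE.
by move: hj; apply: contra => /eqP h; apply/eqP/val_inj.
Qed.

Definition in_span (s : seq V) (x : V) :=
  exists c : nat -> R, x = \sum_(i < size s) c i *: s`_i.

Lemma span0 s : in_span s 0.
Proof. by exists (fun _ => 0); rewrite big1 // => i _; rewrite scale0r. Qed.
Lemma spanD s x y : in_span s x -> in_span s y -> in_span s (x + y).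
Proof.
move=> [c ->] [d ->]; exists (fun i => c i + d i).
by rewrite -big_split; apply: eq_bigr => i _; rewrite scalerDl.
Qed.
Lemma spanZ s a x : in_span s x -> in_span s (a *: x).
Proof.
move=> [c ->]; exists (fun i => a * c i).
by rewrite scaler_sumr; apply: eq_bigr => i _; rewrite scalerA.
Qed.
Lemma span_sum s I (r : seq I) (P : pred I) (F : I -> V) :
  (forall i, P i -> in_span s (F i)) -> in_span s (\sum_(i <- r | P i) F i).
Proof. by move=> h; apply: big_ind => //; [exact: span0 | exact: spanD]. Qed.
Lemma span_nth s i : in_span s s`_i.
Proof.
case: (ltnP i (size s)) => hi.
  by exists (fun j => (j == i)%:R); rewrite sum_deltaV.
by rewrite nth_default //; apply: span0.
Qed.
Lemma span_ind (Pr : V -> Prop) s :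
  Pr 0 -> (forall x y, Pr x -> Pr y -> Pr (x + y)) ->
  (forall a x, Pr x -> Pr (a *: x)) -> (forall i, Pr s`_i) ->
  forall x, in_span s x -> Pr x.
Proof.
move=> h0 hD hZ hs x [c ->]; apply: big_ind => // i _; exact: hZ.
Qed.
Lemma span_trans s t x : (forall i, in_span t s`_i) -> in_span s x -> in_span t x.
Proof.
move=> h; apply: span_ind => //; [exact: span0|exact: spanD|exact: spanZ].
Qed.

Arguments span_trans {s t x}.

Definition orthonormal (g : seq V) := forall i j, (i < size g)%N ->
  (j < size g)%N -> ip g`_i g`_j = (i == j)%:R.

Definition proj (g : seq V) (x : V) := \sum_(i < size g) ip x g`_i *: g`_i.

Lemma proj_span g x : in_span g (proj g x).
Proof. by exists (fun i => ip x g`_i). Qed.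

Lemma proj_id g x : orthonormal g -> in_span g x -> proj g x = x.
Proof.
move=> og [c ->]; apply: eq_bigr => i _; congr (_ *: _).
rewrite ip_suml (eq_bigr (fun j : 'I_(size g) => c j * ((j : nat) == i)%:R)).
  by rewrite sum_delta.
by move=> j _; rewrite ipZl og.
Qed.

Lemma proj_sym g x y : ip (proj g x) y = ip x (proj g y).
Proof.
rewrite ip_suml ip_sumr; apply: eq_bigr => i _.
by rewrite ipZl ipZr (ipC g`_i) mulrC.
Qed.

Lemma proj_ip g w x : orthonormal g -> in_span g x -> ip (proj g w) x = ip w x.
Proof. by move=> og hx; rewrite proj_sym proj_id. Qed.

Lemma proj_le g w : orthonormal g -> ip (proj g w) (proj g w) <= ip w w.
Proof.
move=> og; have h := ipxx_ge0 (w - proj g w).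
have e : ip (proj g w) (proj g w) = ip w (proj g w).
  by rewrite proj_ip //; apply: proj_span.
rewrite ipBl !ipBr e (ipC (proj g w) w) in h.
rewrite e; lra.
Qed.

Lemma span_cons v s i : in_span (v :: s) s`_i.
Proof. exact: (span_nth (v :: s) i.+1). Qed.

Lemma span_rcons g w i : in_span (rcons g w) g`_i.
Proof.
case: (ltnP i (size g)) => hi; last by rewrite nth_default //; apply: span0.
by have := span_nth (rcons g w) i; rewrite nth_rcons hi.
Qed.

Lemma GS (s : seq V) : exists g, [/\ orthonormal g,
  (forall i, in_span g s`_i) & (forall i, in_span s g`_i)].
Proof.
elim: s => [|v s [g [og hsg hgs]]].
  exists [::]; split => //; first by move=> i; rewrite nth_nil; apply: span0.
  by move=> i; rewrite nth_nil; apply: span0.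
have hgvs i : in_span (v :: s) g`_i.
  by apply: (span_trans _ (hgs i)) => j; apply: span_cons.
pose r := v - proj g v.
have [r0|rn0] := eqVneq (ip r r) 0.
  exists g; split => // -[|i] /=; last exact: hsg.
  have := ipxx_eq0 r0; rewrite /r => /eqP; rewrite subr_eq0 => /eqP ->.
  exact: proj_span.
have rpos : 0 < inorm ip r.
  rewrite lt_def inorm_ge0 andbT; apply/eqP => /inorm_eq0 h0.
  by move: rn0; rewrite h0 ip0l eqxx.
pose k := (inorm ip r)^-1.
have rorth j : (j < size g)%N -> ip (k *: r) g`_j = 0.
  move=> hj; rewrite ipZl /r ipBl proj_ip ?subrr ?mulr0 //; exact: span_nth.
have rnorm : ip (k *: r) (k *: r) = 1.
  rewrite ipZl ipZr -inorm_sq /k mulrA -expr2 -exprMn mulVf //.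
    by rewrite expr1n.
  by rewrite gt_eqF.
exists (rcons g (k *: r)); split.
- move=> i j; rewrite size_rcons !ltnS !nth_rcons.
  rewrite leq_eqVlt => /orP [/eqP ->|hi]; rewrite leq_eqVlt => /orP [/eqP ->|hj].
  + by rewrite ltnn eqxx.
  + by rewrite ltnn eqxx hj rorth // eq_sym (ltn_eqF hj).
  + by rewrite hi (ltn_eqF hi) ltnn eqxx ipC rorth.
  + by rewrite hi hj og.
- move=> [|i] /=; last first.
    by apply: (span_trans _ (hsg i)) => j; apply: span_rcons.
  have -> : v = proj g v + inorm ip r *: (k *: r).
    by rewrite scalerA /k mulfV ?gt_eqF // scale1r /r addrC subrK.
  apply: spanD; last first.
    by apply: spanZ; have := span_nth (rcons g (k *: r)) (size g); rewrite nth_rcons ltnn eqxx.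
  apply: (span_trans _ (proj_span g v)) => j; exact: span_rcons.
- move=> i; rewrite nth_rcons; case: ifP => _; first exact: hgvs.
  case: ifP => _; last exact: span0.
  apply: spanZ; rewrite /r; apply: spanD; first exact: (span_nth (v :: s) 0).
  rewrite -scaleN1r; apply: spanZ; apply: span_sum => j _; apply: spanZ; exact: hgvs.
Qed.

End IPBasics.

Local Open Scope classical_set_scope.
Section OpDefs.
Variable R : realType.
Definition lin (X Y : lmodType R) (A : X -> Y) := forall a x z, A (a *: x + z) = a *: A x + A z.
Definition bnd (X Y : lmodType R) (ipX : X -> X -> R) (ipY : Y -> Y -> R) (A : X -> Y) :=
  exists C, 0 <= C /\ forall x, inorm ipY (A x) <= C * inorm ipX x.
Definition is_adj (X Y : lmodType R) (ipX : X -> X -> R) (ipY : Y -> Y -> R) (A : X -> Y) (B : Y -> X) :=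
  forall x y, ipY (A x) y = ipX x (B y).
End OpDefs.

Section Ops.
Variables (R : realType) (X Y : lmodType R) (ipX : X -> X -> R) (ipY : Y -> Y -> R).
Hypotheses (hX : is_inner_product ipX) (hY : is_inner_product ipY).
Implicit Types (A : X -> Y) (B : Y -> X).


Lemma lin0 A : lin A -> A 0 = 0.
Proof.
move=> hA; have := hA 1 0 0; rewrite scaler0 addr0 scale1r => h.
by apply: (@addrI _ (A 0)); rewrite addr0 -h.
Qed.
Lemma linD A x z : lin A -> A (x + z) = A x + A z.
Proof. by move=> hA; have := hA 1 x z; rewrite !scale1r. Qed.
Lemma linZ A a x : lin A -> A (a *: x) = a *: A x.
Proof. by move=> hA; have := hA a x 0; rewrite !addr0 lin0 // addr0. Qed.
Lemma lin_sum A I (r : seq I) (P : pred I) (F : I -> X) : lin A ->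
  A (\sum_(i <- r | P i) F i) = \sum_(i <- r | P i) A (F i).
Proof.
move=> hA; apply: (big_morph A) => [x y|]; [exact: linD | exact: lin0].
Qed.

Lemma bounded_opP A : bounded_op ipX ipY A <-> lin A /\ bnd ipX ipY A.
Proof.
split=> [[hl [C hC]]|[hl [C [_ hC]]]]; last by split=> //; exists C.
split=> //; exists (Num.max C 0); split; first by rewrite le_max lexx orbT.
move=> x; apply: (le_trans (hC x)); apply: ler_wpM2r; first exact: inorm_ge0.
by rewrite le_max lexx.
Qed.

Lemma is_adj_adjoint A B : is_adj ipX ipY A B -> is_adj ipX ipY A (adjoint ipX ipY A).
Proof.
move=> hB x y; rewrite /adjoint.
have := @xgetPex _ 0 (fun v => forall x, ipY (A x) y = ipX x v).
by apply => //; exists (B y).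
Qed.

Lemma adj_uniq A B B' : is_adj ipX ipY A B -> is_adj ipX ipY A B' -> forall y, B y = B' y.
Proof. by move=> h h' y; apply: (ip_sep hX) => z; rewrite -h h'. Qed.

Lemma adj_lin A B : is_adj ipX ipY A B -> lin B.
Proof.
move=> h a y y'; apply: (ip_sep hX) => z.
by rewrite -h (ipDr hY) (ipZr hY) (ipDr hX) (ipZr hX) !h.
Qed.

Lemma adj_bnd A B : lin A -> bnd ipX ipY A -> is_adj ipX ipY A B -> bnd ipY ipX B.
Proof.
move=> hl [C [C0 hC]] h; exists C; split => // y.
have e : inorm ipX (B y) ^+ 2 <= C * inorm ipX (B y) * inorm ipY y.
  rewrite (inorm_sq hX) -h; apply: le_trans (ler_norm _) _.
  apply: le_trans (CS hY _ _) _; apply: ler_wpM2r; first exact: inorm_ge0.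
  exact: hC.
have n0 := inorm_ge0 ipX (B y).
have [->|np] := eqVneq (inorm ipX (B y)) 0; first by rewrite mulr_ge0 ?inorm_ge0.
have npos : 0 < inorm ipX (B y) by rewrite lt_def np n0.
by move: e; rewrite expr2 (mulrC C) -mulrA ler_pM2l.
Qed.

Lemma adj_exists (f : seq X) A : orthonormal ipX f -> (forall x, in_span f x) ->
  lin A -> is_adj ipX ipY A (fun y => \sum_(j < size f) ipY (A f`_j) y *: f`_j).
Proof.
move=> hof hf hl x y; rewrite (ip_sumr hX) -{1}(proj_id hX hof (hf x)) /proj.
rewrite lin_sum // (ip_suml hY); apply: eq_bigr => j _.
by rewrite linZ // (ipZl hY) (ipZr hX) mulrC.
Qed.

Lemma opnorm_ge0 A : lin A -> bnd ipX ipY A -> 0 <= opnorm ipX ipY A.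
Proof.
move=> hl [C [C0 hC]]; apply: (sup_upper_bound (E := [set inorm ipY (A x) | x in [set x | inorm ipX x <= 1]])).
  split; first by exists (inorm ipY (A 0)), 0 => //=; rewrite (inorm0 hX).
  exists C => _ [x /= hx <-]; apply: le_trans (hC x) _.
  by rewrite -{2}(mulr1 C) ler_wpM2l.
by exists 0 => //=; rewrite ?(inorm0 hX) ?lin0 // (inorm0 hY).
Qed.

Lemma opnorm_ub A x : lin A -> bnd ipX ipY A -> inorm ipY (A x) <= opnorm ipX ipY A * inorm ipX x.
Proof.
move=> hl [C [C0 hC]].
have hs : has_sup [set inorm ipY (A x) | x in [set x | inorm ipX x <= 1]].
  split; first by exists (inorm ipY (A 0)), 0 => //=; rewrite (inorm0 hX).
  exists C => _ [z /= hz <-]; apply: le_trans (hC z) _.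
  by rewrite -{2}(mulr1 C) ler_wpM2l.
have n0 := inorm_ge0 ipX x.
have [hx|np] := eqVneq (inorm ipX x) 0.
  by rewrite hx mulr0 (inorm_eq0 hX hx) lin0 // (inorm0 hY).
have t0 : 0 < inorm ipX x by rewrite lt_def np n0.
have h1 : inorm ipY (A ((inorm ipX x)^-1 *: x)) <= opnorm ipX ipY A.
  apply: (sup_upper_bound hs); exists ((inorm ipX x)^-1 *: x) => //=.
  by rewrite (inormZ hX) ger0_norm ?invr_ge0 // mulVf.
move: h1; rewrite linZ // (inormZ hY) ger0_norm ?invr_ge0 //.
by rewrite -ler_pdivrMr // mulrC.
Qed.
End Ops.

Section Comp.
Variables (R : realType) (X Y Z : lmodType R) (ipX : X -> X -> R) (ipY : Y -> Y -> R) (ipZ : Z -> Z -> R).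
Hypotheses (hX : is_inner_product ipX) (hY : is_inner_product ipY) (hZ : is_inner_product ipZ).

Lemma opnorm_le (A : X -> Y) K : lin A ->
  (forall x, inorm ipX x <= 1 -> inorm ipY (A x) <= K) -> opnorm ipX ipY A <= K.
Proof.
move=> hl h; apply: ge_sup.
  by exists (inorm ipY (A 0)), 0 => //=; rewrite (inorm0 hX).
by move=> _ [x /= hx <-]; apply: h.
Qed.

Lemma lin_comp (A : X -> Y) (B : Y -> Z) : lin A -> lin B -> lin (fun x => B (A x)).
Proof. by move=> hA hB a x z; rewrite hA hB. Qed.

Lemma bnd_comp (A : X -> Y) (B : Y -> Z) : bnd ipX ipY A -> bnd ipY ipZ B ->
  bnd ipX ipZ (fun x => B (A x)).
Proof.
move=> [C [C0 hC]] [D [D0 hD]]; exists (D * C); split; first exact: mulr_ge0.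
move=> x; apply: le_trans (hD _) _; rewrite -mulrA; apply: ler_wpM2l => //.
Qed.

Lemma lin_sumf I (r : seq I) (F : I -> X -> Y) : (forall i, lin (F i)) ->
  lin (fun x => \sum_(i <- r) F i x).
Proof.
move=> h a x z; rewrite scaler_sumr -big_split; apply: eq_bigr => i _; exact: h.
Qed.

Lemma bnd_sumf I (r : seq I) (F : I -> X -> Y) : (forall i, bnd ipX ipY (F i)) ->
  bnd ipX ipY (fun x => \sum_(i <- r) F i x).
Proof.
move=> h; elim: r => [|i r [C [C0 hC]]].
  by exists 0; split => // x; rewrite big_nil (inorm0 hY) mul0r.
have [D [D0 hD]] := h i; exists (D + C); split; first exact: addr_ge0.
move=> x; rewrite big_cons; apply: le_trans (inormD hY _ _) _.
by rewrite mulrDl lerD.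
Qed.

Lemma lin_rank1 (a : X) (b : Y) : lin (fun x => ipX x a *: b).
Proof. by move=> c x z; rewrite (ipL hX) scalerDl scalerA. Qed.

Lemma bnd_rank1 (a : X) (b : Y) : bnd ipX ipY (fun x => ipX x a *: b).
Proof.
exists (inorm ipX a * inorm ipY b); split; first by rewrite mulr_ge0 ?inorm_ge0.
move=> x; rewrite (inormZ hY).
apply: le_trans (ler_wpM2r (inorm_ge0 _ _) (CS hX x a)) _.
by rewrite le_eqVlt; apply/orP; left; apply/eqP; ring.
Qed.

End Comp.

Section Main.
Variables (R : realType) (U W : lmodType R) (ipU : U -> U -> R) (ipW : W -> W -> R).
Hypotheses (hU : is_inner_product ipU) (hW : is_inner_product ipW).
Variable (f : seq U).
Hypotheses (hof : orthonormal ipU f) (hf : forall x, in_span f x).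
Variables (phi : U -> U -> W) (n : nat) (u : 'I_n -> U).
Hypotheses (hphil : forall x, lin (phi x)) (hphib : forall x, bnd ipU ipW (phi x)).

Local Notation UN := {ffun 'I_n -> U}.
Local Notation p := (ip_pow ipU (n:=n)).
Local Notation Phi := (PhiOp phi u).

Lemma hP : is_inner_product p.
Proof.
split.
- by move=> x y; apply: eq_bigr => i _; rewrite ipC.
- move=> a x y z; rewrite /ip_pow mulr_sumr -big_split; apply: eq_bigr => i _.
  by rewrite !ffunE ipL.
- by move=> x; apply: sumr_ge0 => i _; apply: ipxx_ge0.
- move=> x h; apply/ffunP => i; rewrite ffunE; apply: (ipxx_eq0 hU).
  by apply: (psumr_eq0P _ h) => // j _; apply: ipxx_ge0.
Qed.

Lemma Phi_lin : lin Phi.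
Proof.
move=> a x z; rewrite /PhiOp scaler_sumr -big_split; apply: eq_bigr => i _.
by rewrite !ffunE hphil.
Qed.

Lemma Phi_bnd : bnd p ipW Phi.
Proof.
rewrite /PhiOp; apply: (@bnd_sumf _ _ _ _ _ hW _ _ (fun i (v : UN) => phi (u i) (v i))) => i.
apply: (bnd_comp (A := fun v : UN => v i)) (hphib _).
exists 1; split => // v; rewrite mul1r /inorm ler_sqrt; last exact: ipxx_ge0 hP _.
rewrite /ip_pow (bigD1 i) //= lerDl; apply: sumr_ge0 => j _; exact: ipxx_ge0.
Qed.

Definition Ad i := adjoint ipU ipW (phi (u i)).

Lemma Ad_adj i : is_adj ipU ipW (phi (u i)) (Ad i).
Proof. exact: (is_adj_adjoint (adj_exists hU hW hof hf (hphil _))). Qed.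

Definition Phis := adjoint p ipW Phi.

Lemma Phis_adj : is_adj p ipW Phi Phis.
Proof.
apply: (is_adj_adjoint (B := fun w => [ffun i => Ad i w])) => v w.
rewrite /PhiOp (ip_suml hW) /ip_pow; apply: eq_bigr => i _.
by rewrite ffunE Ad_adj.
Qed.

Lemma Phis_lin : lin Phis.
Proof. have := adj_lin hP hW Phis_adj. exact. Qed.

Lemma Phis_bnd : bnd ipW p Phis.
Proof. have := adj_bnd hP hW Phi_lin Phi_bnd Phis_adj. exact. Qed.

Lemma PhiMPhi_ok (M : UN -> UN) : bounded_op p p M -> nonneg_op p M ->
  bounded_op ipW ipW (PhiMPhi ipU ipW phi u M) /\ nonneg_op ipW (PhiMPhi ipU ipW phi u M).
Proof.
move=> /bounded_opP [ml mb] mn; split.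
  apply/bounded_opP; split.
    exact: lin_comp (lin_comp Phis_lin ml) Phi_lin.
  exact: bnd_comp (bnd_comp Phis_bnd mb) Phi_bnd.
move=> w; rewrite /PhiMPhi Phis_adj; exact: mn.
Qed.


Lemma exists_g : exists g : seq W, [/\ orthonormal ipW g,
  (forall i x, in_span g (phi (u i) x)) & (forall l, exists z, g`_l = Phi z)].
Proof.
pose s2 := [seq phi (u i) x | i <- enum 'I_n, x <- f].
have [g [og hs2g hgs2]] := GS hW s2.
exists g; split => //.
- move=> i x; rewrite -(proj_id hU hof (hf x)) /proj lin_sum //.
  apply: span_sum => j _; rewrite linZ //; apply: spanZ.
  have hin : phi (u i) f`_j \in s2.
    by apply: allpairs_f; [rewrite mem_enum | apply: mem_nth].
  by rewrite -(nth_index 0 hin); apply: hs2g.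
- move=> l; apply: (span_ind (Pr := fun w => exists z, w = Phi z)) (hgs2 l).
  + by exists 0; rewrite lin0 //; exact: Phi_lin.
  + by move=> _ _ [a ->] [b ->]; exists (a + b); rewrite linD //; exact: Phi_lin.
  + by move=> c _ [a ->]; exists (c *: a); rewrite linZ //; exact: Phi_lin.
  + move=> k; case: (ltnP k (size s2)) => hk; last first.
      by rewrite nth_default //; exists 0; rewrite lin0 //; exact: Phi_lin.
    have /allpairsP [[i x] [_ _ /= ->]] := mem_nth 0 hk.
    exists [ffun j => if j == i then x else 0].
    rewrite /PhiOp (bigD1 i) //= ffunE eqxx big1 ?addr0 // => j hj.
    by rewrite ffunE (negbTE hj) lin0.
Qed.

Lemma key (y : 'I_n -> U) (gamma : R) (Q : W -> W) : 0 <= gamma ->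
  bounded_op ipW ipW Q -> nonneg_op ipW Q ->
  exists M, [/\ bounded_op p p M, nonneg_op p M &
    objP ipU ipW phi u y gamma (PhiMPhi ipU ipW phi u M) <= objP ipU ipW phi u y gamma Q].
Proof.
move=> g0 /bounded_opP [ql qb] qn.
have [g [og hg gz]] := exists_g.
have [z hz] := choice gz.
pose P w := proj ipW g w.
pose Aop := fun v : UN => \sum_(l < size g) p v (z l) *: g`_l.
pose Bop := fun w : W => \sum_(l < size g) ipW w g`_l *: z l.
have Al : lin Aop.
  by have := @lin_sumf _ _ _ _ (index_enum 'I_(size g)) (fun l v => p v (z l) *: g`_l); apply => l; exact: (lin_rank1 hP (z l) g`_l).
have Bl : lin Bop.
  by have := @lin_sumf _ _ _ _ (index_enum 'I_(size g)) (fun l w => ipW w g`_l *: z l); apply => l; exact: (lin_rank1 hW g`_l (z l)).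
have Ab : bnd p ipW Aop.
  by have := @bnd_sumf _ _ _ _ _ hW _ (index_enum 'I_(size g)) (fun l v => p v (z l) *: g`_l); apply => l; exact: (bnd_rank1 hP hW (z l) g`_l).
have Bb : bnd ipW p Bop.
  by have := @bnd_sumf _ _ _ _ _ hP _ (index_enum 'I_(size g)) (fun l w => ipW w g`_l *: z l); apply => l; exact: (bnd_rank1 hW hP g`_l (z l)).
have hBA w v : p (Bop w) v = ipW w (Aop v).
  rewrite (ip_suml hP) (ip_sumr hW); apply: eq_bigr => l _.
  by rewrite (ipZl hP) (ipZr hW) mulrC (ipC hP).
have hAP w : Aop (Phis w) = P w.
  apply: eq_bigr => l _; congr (_ *: _).
  by rewrite (ipC hP) -Phis_adj -hz (ipC hW).
have hPB w : Phi (Bop w) = P w.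
  rewrite lin_sum; last exact: Phi_lin.
  by apply: eq_bigr => l _; rewrite linZ ?hz //; exact: Phi_lin.
pose M := fun v => Bop (Q (Aop v)).
have Mb : bounded_op p p M.
  apply/bounded_opP; split.
    exact: lin_comp (lin_comp Al ql) Bl.
  exact: bnd_comp (bnd_comp Ab qb) Bb.
have Mn : nonneg_op p M by move=> v; rewrite /M hBA; apply: qn.
exists M; split => //.
have [/bounded_opP [Ql _] _] := PhiMPhi_ok Mb Mn.
have hM w : PhiMPhi ipU ipW phi u M w = P (Q (P w)).
  by rewrite /PhiMPhi /M hAP hPB.
have hPn w : inorm ipW (P w) <= inorm ipW w.
  by rewrite /inorm ler_sqrt ?(ipxx_ge0 hW) // proj_le.
have hAdP i w : Ad i (P w) = Ad i w.
  apply: (ip_sep hU) => x; rewrite -!Ad_adj -(proj_sym hW).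
  by have := proj_id hW og (hg i x); rewrite /P => ->.
rewrite /objP; apply: lerD.
  rewrite le_eqVlt; apply/orP; left; apply/eqP; apply: eq_bigr => i _.
  rewrite hM; have := proj_id hW og (hg i (u i)); rewrite /P => ->.
  by have := hAdP i (Q (phi (u i) (u i))); rewrite /Ad => ->.
apply: ler_wpM2l => //; apply: (opnorm_le hW Ql) => w hw.
rewrite hM; apply: le_trans (hPn _) _.
apply: le_trans (opnorm_ub hW hW _ ql qb) _.
rewrite -{2}(mulr1 (opnorm ipW ipW Q)); apply: ler_wpM2l; first by have := opnorm_ge0 hW hW ql qb.
exact: le_trans (hPn _) hw.
Qed.

End Main.

Theorem theorem1 (R : realType) (U W : lmodType R)
  (ipU : U -> U -> R) (ipW : W -> W -> R)
  (hU : is_hilbert ipU) (hW : is_hilbert ipW) (fdU : finite_dim U)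
  (phi : U -> U -> W) (hphi : forall x : U, bounded_op ipU ipW (phi x))
  (n : nat) (u y : 'I_n -> U) (gamma : R) (hgamma : 0 < gamma) :
  ((exists Q : W -> W, solves_P ipU ipW phi u y gamma Q) <->
   (exists M : {ffun 'I_n -> U} -> {ffun 'I_n -> U},
      solves_P' ipU ipW phi u y gamma M)) /\
  (forall M : {ffun 'I_n -> U} -> {ffun 'I_n -> U},
      solves_P' ipU ipW phi u y gamma M ->
      solves_P ipU ipW phi u y gamma (PhiMPhi ipU ipW phi u M)).
Proof.
have hUi := proj1 hU; have hWi := proj1 hW.
have [d [e he]] := fdU.
have [f [hof hs _]] := GS hUi [seq e i | i <- enum 'I_d].
have hf : forall x, in_span f x.
  move=> x; have [c ->] := he x; apply: span_sum => i _; apply: spanZ.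
  have hin : e i \in [seq e i | i <- enum 'I_d] by apply: map_f; rewrite mem_enum.
  by rewrite -(nth_index 0 hin); apply: hs.
have hphil : forall x, lin (phi x) by move=> x; case: (proj1 (bounded_opP _ _ _) (hphi x)).
have hphib : forall x, bnd ipU ipW (phi x) by move=> x; case: (proj1 (bounded_opP _ _ _) (hphi x)).
have g0 : 0 <= gamma := ltW hgamma.
have KEY := key hUi hWi hof hf u hphil hphib y (gamma := gamma).
have OK := PhiMPhi_ok hUi hWi hof hf u hphil hphib.
have part2 : forall M, solves_P' ipU ipW phi u y gamma M ->
    solves_P ipU ipW phi u y gamma (PhiMPhi ipU ipW phi u M).
  move=> M [Mb Mn Mopt]; have [b nn] := OK M Mb Mn; split => // Q' Qb Qn.
  have [M' [M'b M'n le]] := KEY Q' g0 Qb Qn.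
  exact: le_trans (Mopt M' M'b M'n) le.
split => //; split.
- move=> [Q [Qb Qn Qopt]]; have [M [Mb Mn le]] := KEY Q g0 Qb Qn.
  exists M; split => // M' M'b M'n; apply: le_trans le _.
  have [b nn] := OK M' M'b M'n; exact: Qopt.
- by move=> [M hM]; exists (PhiMPhi ipU ipW phi u M); apply: part2.
Qed.
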